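(* Let $X$ be a finite set of proposals with $|X|\geq 3$. No divisiveness selection function on $X$ simultaneously satisfies Anonymity, Neutrality, Clone Consistency, and Position Unanimity.
   Context: $X!$ is the set of strict linear orders on $X$; a profile is a function $R:N\to X!$ with $N\subset\mathbb{N}$ finite and nonempty. A divisiveness selection function (DSF) maps every profile to a nonempty subset of $X$. Anonymity: $\Delta(R)=\Delta(R\circ\sigma)$ for every profile $R$ and every bijection $\sigma:\mathbb{N}\to\mathbb{N}$. Neutrality: $\Delta(\sigma(R))=\sigma(\Delta(R))$ for every profile $R$ and permutation $\sigma:X\to X$ (extended naturally to subsets of $X$ and to profiles). Two proposals are clones in $R$ if they are adjacent in every agent's ranking in $R$. Clone Consistency: for every profile $R$ and proposals $x,x',y$ such that $x,x'$ are clones in $R$ but $x,y$ are not, $\{x,y\}\subseteq\Delta(R)$ implies $\{x,x',y\}\subseteq\Delta(R)$. A profile is unanimous if all agents report the same ranking; $x$ occurs in the same position throughout $R$ if the number of proposals ranked above $x$ is the same in every ranking of $R$. Position Unanimity: $x\notin\Delta(R)$ for every non-unanimous profile $R$ and every proposal $x$ occurring in the same position throughout $R$. *)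

(* Defs.v *)
From mathcomp Require Import all_boot all_order.
From mathcomp Require Import perm.
Set Implicit Arguments. Unset Strict Implicit. Unset Printing Implicit Defensive.

Section Divisiveness.
Variable X : finType.

(* A strict linear order on X, given as a boolean relation r (r a b = "a is ranked above b"). *)
Definition strict_linear (r : rel X) : Prop :=
  [/\ forall a, ~~ r a a,
      forall a b c, r a b -> r b c -> r a c
    & forall a b, a != b -> r a b || r b a].

(* A raw profile: agent i reports Some r if i \in N, None otherwise. *)
Definition profile := nat -> option (rel X).

Definition is_profile (R : profile) : Prop :=
  [/\ exists n, forall i, n <= i -> R i = None,
      exists i, R i <> None
    & forall i r, R i = Some r -> strict_linear r].

Definition is_DSF (D : profile -> {set X}) : Prop :=
  forall R, is_profile R -> D R != set0.

Definition anonymous (D : profile -> {set X}) : Prop :=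
  forall R (s : nat -> nat), is_profile R -> bijective s -> D R = D (R \o s).

Definition perm_profile (s : {perm X}) (R : profile) : profile :=
  fun i => omap (fun r : rel X => fun a b => r ((s^-1)%g a) ((s^-1)%g b)) (R i).

Definition neutral (D : profile -> {set X}) : Prop :=
  forall R (s : {perm X}), is_profile R -> D (perm_profile s R) = s @: D R.

Definition adjacent (r : rel X) (x y : X) : Prop :=
  x != y /\ forall z, ~ ((r x z && r z y) || (r y z && r z x)).

Definition clones (R : profile) (x y : X) : Prop :=
  x != y /\ forall i r, R i = Some r -> adjacent r x y.

Definition clone_consistent (D : profile -> {set X}) : Prop :=
  forall R x x' y, is_profile R -> clones R x x' -> y != x -> ~ clones R x y ->
    x \in D R -> y \in D R -> [/\ x \in D R, x' \in D R & y \in D R].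

Definition unanimous (R : profile) : Prop :=
  forall i j r1 r2, R i = Some r1 -> R j = Some r2 -> r1 =2 r2.

Definition position (r : rel X) (x : X) : nat := #|[set y | r y x]|.

Definition same_position (R : profile) (x : X) : Prop :=
  forall i j r1 r2, R i = Some r1 -> R j = Some r2 -> position r1 x = position r2 x.

Definition position_unanimous (D : profile -> {set X}) : Prop :=
  forall R x, is_profile R -> ~ unanimous R -> same_position R x -> x \notin D R.

End Divisiveness.

(* Main.v *)
Require Import Defs.
From mathcomp Require Import all_boot all_order.
From mathcomp Require Import perm.
From Stdlib Require Import FunctionalExtensionality.
From mathcomp Require Import zify.

Set Implicit Arguments. Unset Strict Implicit.
Section Aux.
Variable X : finType.

Definition rel_of (f : X -> nat) : rel X := fun u v => (f u < f v)%N.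

Lemma rel_of_linear f : injective f -> strict_linear (rel_of f).
Proof.
move=> fi; split; rewrite /rel_of.
- by move=> x; rewrite ltnn.
- by move=> x y z; apply: ltn_trans.
- move=> x y xy; case: (ltngtP (f x) (f y)) => //= E.
  by move/fi: E => E; rewrite E eqxx in xy.
Qed.

Lemma pos_perm f (t : {perm X}) x : t x = x ->
  position (rel_of (f \o t)) x = position (rel_of f) x.
Proof.
move=> tx; rewrite /position /rel_of /= tx.
rewrite -(card_preimset [set y | (f y < f x)%N] (@perm_inj _ t)).
by apply: eq_card => y; rewrite !inE.
Qed.
End Aux.

Theorem theorem3 (X : finType) (H3 : 3 <= #|X|) (D : profile X -> {set X}) :
  ~ [/\ is_DSF D, anonymous D, neutral D, clone_consistent D & position_unanimous D].
Proof.
move=> [HD Han Hne Hcc Hpu].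
have h0 : (0 < #|X|)%N by apply: leq_trans H3.
have h1 : (1 < #|X|)%N by apply: leq_trans H3.
have h2 : (2 < #|X|)%N by [].
set a := enum_val (Ordinal h0).
set b := enum_val (Ordinal h1).
set c := enum_val (Ordinal h2).
have ab : a != b by apply/eqP => /enum_val_inj.
have ac : a != c by apply/eqP => /enum_val_inj.
have bc : b != c by apply/eqP => /enum_val_inj.
pose f1 (x : X) : nat := if x == a then 0 else if x == b then 1 else if x == c then 2
   else 3 + enum_rank x.
have fa : f1 a = 0 by rewrite /f1 eqxx.
have fb : f1 b = 1 by rewrite /f1 eqxx eq_sym (negbTE ab).
have fc : f1 c = 2 by rewrite /f1 eqxx eq_sym (negbTE ac) eq_sym (negbTE bc).
have fi : injective f1.
  move=> x y; rewrite /f1.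
  do 4?[case: ifP => [/eqP->|_]]; do 4?[case: ifP => [/eqP->|_]] => //;
  by move/eqP; rewrite eqn_add2l => /eqP/ord_inj/enum_rank_inj.
pose t := tperm a c.
pose f2 := f1 \o t.
have f2a : f2 a = 2 by rewrite /f2 /= tpermL.
have f2c : f2 c = 0 by rewrite /f2 /= tpermR.
have f2b : f2 b = 1 by rewrite /f2 /= tpermD // eq_sym.
have fi2 : injective f2 by apply: inj_comp => //; apply: perm_inj.
pose r1 := rel_of f1. pose r2 := rel_of f2.
pose R : profile X := fun i => if i == 0 then Some r1 else if i == 1 then Some r2 else None.
have HR : is_profile R.
  split.
  - exists 2 => -[|[|i]] //.
  - by exists 0.
  - move=> [|[|i]] r //= [<-]; exact: rel_of_linear.
have Rcase : forall i r, R i = Some r -> r = r1 \/ r = r2.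
  by move=> [|[|i]] r //= [<-]; [left|right].
have nonun : ~ unanimous R.
  move=> U; have := U 0 1 r1 r2 erefl erefl a b.
  by rewrite /r1 /r2 /rel_of fa fb f2a f2b.
have sp : forall x, x != a -> x != c -> same_position R x.
  move=> x xa xc.
  have tx : t x = x by rewrite /t tpermD // eq_sym.
  have E : position r2 x = position r1 x by rewrite /r2 /f2 pos_perm.
  move=> i j q1 q2 /Rcase [->|->] /Rcase [->|->] //.
have sub : forall x, x \in D R -> x = a \/ x = c.
  move=> x xD; case: (eqVneq x a) => [->|xa]; first by left.
  case: (eqVneq x c) => [->|xc]; first by right.
  by have := Hpu R x HR nonun (sp x xa xc); rewrite xD.
pose s (n : nat) : nat := if n == 0 then 1 else if n == 1 then 0 else n.
have sbij : bijective s by exists s => -[|[|n]].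
have Epr : perm_profile t R = R \o s.
  apply: functional_extensionality => -[|[|n]] //=; congr Some;
  apply: functional_extensionality => u; apply: functional_extensionality => v;
  rewrite /t tpermV /r1 /r2 /f2 /rel_of //= !tpermK //.
have inv : D R = t @: D R by rewrite -Hne // Epr -Han.
have both : a \in D R /\ c \in D R.
  have := HD R HR; case/set0Pn => x xD.
  have tx : t x \in D R by rewrite inv; apply: imset_f.
  case: (sub x xD) => Ex; subst x.
  - by move: tx; rewrite /t tpermL.
  - by move: tx; rewrite /t tpermR.
case: both => aD cD.
have cl : clones R a b.
  split => // i r /Rcase [->|->]; split => // z;
  rewrite /r1 /r2 /rel_of ?fa ?fb ?f2a ?f2b; lia.
have ncl : ~ clones R a c.
  move=> [_ /(_ 0 r1 erefl) [_ /(_ b)]].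
  by rewrite /r1 /rel_of fa fb fc.
have [_ bD _] := Hcc R a b c HR cl (ltac:(by rewrite eq_sym)) ncl aD cD.
have bsp : same_position R b by apply: sp; [rewrite eq_sym|].
by have := Hpu R b HR nonun bsp; rewrite bD.
Qed.
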